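(* Let $\mathcal{H}$ be a reproducing kernel Hilbert space of functions on a set $X$, with multiplier algebra $\mathcal{M}(\mathcal{H})$. Let $(\phi_n)_{n\ge1}$ be a sequence of elements of the closed unit ball of $\mathcal{M}(\mathcal{H})$. Put $\Phi_0=1$ and $\Phi_n:=\phi_1\phi_2\cdots\phi_n$ for $n\ge1$. Assume that $\lim_{n\to\infty}\Phi_n(x)=0$ for every $x\in X$. Then for every $f\in\mathcal{H}$, \[ f=\sum_{n=1}^{\infty}\Phi_{n-1}\cdot Q_{\phi_n}M_{\Phi_{n-1}}^{*}f, \] where the series converges in the norm of $\mathcal{H}$.
   Context: For a multiplier $\phi\in\mathcal{M}(\mathcal{H})$, $M_\phi:\mathcal{H}\to\mathcal{H}$ denotes the multiplication operator $M_\phi g=\phi g$, and $M_\phi^*$ its Hilbert space adjoint. The multiplier norm of $\phi$ is the operator norm of $M_\phi$; the closed unit ball of $\mathcal{M}(\mathcal{H})$ consists of the multipliers with $\|M_\phi\|\le 1$. For $\phi\in\mathcal{M}(\mathcal{H})$ define $P_\phi:=M_\phi M_\phi^*$ and $Q_\phi:=I-M_\phi M_\phi^*$, where $I$ is the identity on $\mathcal{H}$. The reproducing kernel of $\mathcal{H}$ at $x\in X$ is denoted $k_x$. *)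

(* Defs.v *)
From HB Require Import structures.
From mathcomp Require Import all_boot all_order all_algebra.
From mathcomp Require Import reals.
From mathcomp Require Import complex.
From Stdlib Require Import ClassicalEpsilon.
Import GRing.Theory Num.Theory.
Set Implicit Arguments. Unset Strict Implicit. Unset Printing Implicit Defensive.
Local Open Scope ring_scope.
Local Open Scope complex_scope.

Definition fadd (R : realType) (X : Type) (f g : X -> R[i]) : X -> R[i] :=
  fun x => f x + g x.
Definition fsub (R : realType) (X : Type) (f g : X -> R[i]) : X -> R[i] :=
  fun x => f x - g x.
Definition fmul (R : realType) (X : Type) (f g : X -> R[i]) : X -> R[i] :=
  fun x => f x * g x.
Definition fscale (R : realType) (X : Type) (a : R[i]) (f : X -> R[i]) :
  X -> R[i] := fun x => a * f x.
Definition fzero (R : realType) (X : Type) : X -> R[i] := fun _ => 0.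

Record RKHS (R : realType) (X : Type) := {
  hs : (X -> R[i]) -> Prop;
  ip : (X -> R[i]) -> (X -> R[i]) -> R[i];
  kern : X -> (X -> R[i]);
  hs0 : hs (@fzero R X);
  hsD : forall f g, hs f -> hs g -> hs (fadd f g);
  hsZ : forall a f, hs f -> hs (fscale a f);
  ipD : forall f g h, hs f -> hs g -> hs h ->
          ip (fadd f g) h = ip f h + ip g h;
  ipZ : forall a f g, hs f -> hs g -> ip (fscale a f) g = a * ip f g;
  ip_conj : forall f g, hs f -> hs g -> ip g f = (ip f g)^*;
  ip_ge0 : forall f, hs f -> 0 <= ip f f;
  ip_eq0 : forall f, hs f -> ip f f = 0 -> f = @fzero R X;
  hs_complete : forall u : nat -> X -> R[i], (forall n, hs (u n)) ->
    (forall eps : R, 0 < eps -> exists N, forall m n, (N <= m)%N -> (N <= n)%N ->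
        sqrtC (ip (fsub (u m) (u n)) (fsub (u m) (u n))) < eps%:C) ->
    exists l, hs l /\
      (forall eps : R, 0 < eps -> exists N, forall n, (N <= n)%N ->
        sqrtC (ip (fsub l (u n)) (fsub l (u n))) < eps%:C);
  kern_hs : forall x, hs (kern x);
  reproducing : forall f x, hs f -> f x = ip f (kern x)
}.

Section Ops.
Variables (R : realType) (X : Type) (H : RKHS R X).

Definition hnorm (f : X -> R[i]) : R[i] := sqrtC (ip H f f).

(* phi belongs to the closed unit ball of the multiplier algebra:
   M_phi maps H into H and ||M_phi|| <= 1. *)
Definition mult_ball (phi : X -> R[i]) : Prop :=
  forall g, hs H g -> hs H (fmul phi g) /\ hnorm (fmul phi g) <= hnorm g.

Definition madj (phi : X -> R[i]) (h : X -> R[i]) : X -> R[i] :=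
  epsilon (inhabits (@fzero R X))
    (fun y => hs H y /\ forall g, hs H g -> ip H (fmul phi g) h = ip H g y).

Definition Qop (phi : X -> R[i]) (g : X -> R[i]) : X -> R[i] :=
  fsub g (fmul phi (madj phi g)).

End Ops.

(* With phi i standing for phi_{i+1} (i >= 0):
   Phi phi n = phi_1 * ... * phi_n, Phi phi 0 = 1. *)
Definition Phi (R : realType) (X : Type) (phi : nat -> X -> R[i]) (n : nat) :
  X -> R[i] := fun x => \prod_(i < n) phi i x.

(* Partial sum  sum_{n=1}^{N} Phi_{n-1} * Q_{phi_n} M^*_{Phi_{n-1}} f,
   written with k = n - 1 ranging over 0 <= k < N. *)
Definition psum (R : realType) (X : Type) (H : RKHS R X)
  (phi : nat -> X -> R[i]) (f : X -> R[i]) (N : nat) : X -> R[i] :=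
  fun x => \sum_(k < N)
    fmul (Phi phi k) (Qop H (phi k) (madj H (Phi phi k) f)) x.

(* Main.v *)
Require Import Defs.
From HB Require Import structures.
From mathcomp Require Import all_boot all_order all_algebra.
From mathcomp Require Import boolp classical_sets reals.
From mathcomp Require Import complex.
From mathcomp Require Import ring lra.
From Stdlib Require Import FunctionalExtensionality ClassicalEpsilon Classical.
Import Order.TTheory GRing.Theory Num.Theory.
Local Open Scope ring_scope.
Local Open Scope complex_scope.
Local Open Scope classical_set_scope.
Set Implicit Arguments. Unset Strict Implicit. Unset Printing Implicit Defensive.

Section S.
Variables (R : realType) (X : Type) (H : RKHS R X).
Local Notation hs := (hs H).
Local Notation ip := (ip H).
Local Notation F := (X -> R[i]).
Implicit Types (f g h u v : X -> R[i]).

Definition re (z : R[i]) : R := let: a +i* _ := z in a.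
Definition im (z : R[i]) : R := let: _ +i* b := z in b.
Lemma reD (a b : R[i]) : re (a + b) = re a + re b.
Proof. by case: a => ? ?; case: b. Qed.
Lemma imD (a b : R[i]) : im (a + b) = im a + im b.
Proof. by case: a => ? ?; case: b. Qed.
Lemma reN (a : R[i]) : re (- a) = - re a.
Proof. by case: a. Qed.
Lemma imN (a : R[i]) : im (- a) = - im a.
Proof. by case: a. Qed.
Lemma reB (a b : R[i]) : re (a - b) = re a - re b.
Proof. by case: a => ? ?; case: b. Qed.
Lemma imB (a b : R[i]) : im (a - b) = im a - im b.
Proof. by case: a => ? ?; case: b. Qed.
Lemma reM (a b : R[i]) : re (a * b) = re a * re b - im a * im b.
Proof. by case: a => ? ?; case: b. Qed.
Lemma imM (a b : R[i]) : im (a * b) = re a * im b + im a * re b.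
Proof. by case: a => ? ?; case: b => ? ? /=; ring. Qed.
Lemma reJ (a : R[i]) : re (conjc a) = re a. Proof. by case: a. Qed.
Lemma imJ (a : R[i]) : im (conjc a) = - im a. Proof. by case: a. Qed.
Lemma reC (t : R) : re (t%:C) = t. Proof. by []. Qed.
Lemma imC (t : R) : im (t%:C) = 0. Proof. by []. Qed.
Lemma re0 : re 0 = 0. Proof. by []. Qed.
Lemma im0 : im 0 = 0. Proof. by []. Qed.
Lemma re1 : re 1 = 1. Proof. by []. Qed.
Lemma im1 : im 1 = 0. Proof. by []. Qed.
Lemma cE (z : R[i]) : z = (re z) +i* (im z). Proof. by case: z. Qed.
Lemma ceqP (z w : R[i]) : re z = re w -> im z = im w -> z = w.
Proof. by case: z => ? ?; case: w => ? ? /= -> ->. Qed.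

Lemma ge0C (z : R[i]) : 0 <= z -> z = (re z)%:C.
Proof. by case: z => a b; rewrite lecE /= => /andP[/eqP -> _]. Qed.

Lemma hsB f g : hs f -> hs g -> hs (fsub f g).
Proof.
move=> hf hg; have -> : fsub f g = fadd f (fscale (-1) g).
  by apply: functional_extensionality => x; rewrite /fsub/fadd/fscale mulN1r.
by apply: hsD => //; apply: hsZ.
Qed.
Definition msq (z : R[i]) : R := re z ^+ 2 + im z ^+ 2.
Lemma msq_ge0 z : 0 <= msq z.
Proof. by rewrite /msq addr_ge0 // sqr_ge0. Qed.
Lemma msq0 z : msq z = 0 -> z = 0.
Proof.
rewrite /msq => h; have h1 : re z ^+ 2 = 0 by have := sqr_ge0 (re z); have := sqr_ge0 (im z); lra.
have h2 : im z ^+ 2 = 0 by have := sqr_ge0 (re z); have := sqr_ge0 (im z); lra.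
by apply: ceqP; rewrite ?re0 ?im0; apply/eqP; rewrite -sqrf_eq0; apply/eqP.
Qed.
Lemma msqM a b : msq (a * b) = msq a * msq b.
Proof. by rewrite /msq reM imM; ring. Qed.
Lemma msqJ a : msq (conjc a) = msq a.
Proof. by rewrite /msq reJ imJ sqrrN. Qed.
Lemma mulJ a : conjc a * a = (msq a)%:C.
Proof. by apply: ceqP; rewrite ?reM ?imM ?reJ ?imJ ?reC ?imC /msq; ring. Qed.
Lemma msqD a b : msq (a + b) <= 2 * msq a + 2 * msq b.
Proof. rewrite /msq reD imD. have := sqr_ge0 (re a - re b); have := sqr_ge0 (im a - im b). nra. Qed.

Lemma hs_sub f g : hs f -> hs g -> hs (fsub f g).
Proof.
move=> hf hg; have -> : fsub f g = fadd f (fscale (-1) g).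
  by apply: functional_extensionality => x; rewrite /fsub/fadd/fscale mulN1r.
by apply: hsD => //; apply: hsZ.
Qed.
Lemma fsubE f g : fsub f g = fadd f (fscale (-1) g).
Proof. by apply: functional_extensionality => x; rewrite /fsub/fadd/fscale mulN1r. Qed.

Lemma ipDr f g h : hs f -> hs g -> hs h -> ip f (fadd g h) = ip f g + ip f h.
Proof.
move=> hf hg hh; rewrite (ip_conj (hsD hg hh) hf) ipD //.
by rewrite rmorphD (ip_conj hg hf) (ip_conj hh hf).
Qed.
Lemma ipZr a f g : hs f -> hs g -> ip f (fscale a g) = conjc a * ip f g.
Proof.
move=> hf hg; rewrite (ip_conj (hsZ a hg) hf) ipZ //.
by rewrite rmorphM (ip_conj hg hf).
Qed.
Lemma ip0l g : hs g -> ip (@fzero R X) g = 0.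
Proof.
move=> hg; have -> : @fzero R X = fscale 0 (@fzero R X).
  by apply: functional_extensionality => x; rewrite /fscale mul0r.
by rewrite ipZ ?mul0r //; apply: hs0.
Qed.
Lemma ip0r g : hs g -> ip g (@fzero R X) = 0.
Proof. by move=> hg; rewrite (ip_conj (hs0 H) hg) ip0l // conjc0. Qed.
Lemma ipBl f g h : hs f -> hs g -> hs h -> ip (fsub f g) h = ip f h - ip g h.
Proof.
move=> hf hg hh; rewrite fsubE ipD ?ipZ //; last by apply: hsZ.
by rewrite mulN1r.
Qed.
Lemma ipBr f g h : hs f -> hs g -> hs h -> ip f (fsub g h) = ip f g - ip f h.
Proof.
move=> hf hg hh; rewrite fsubE ipDr ?ipZr //; last by apply: hsZ.
by rewrite rmorphN1 mulN1r.
Qed.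

Definition Nn u := re (ip u u).
Lemma ipNN u : hs u -> ip u u = (Nn u)%:C.
Proof. by move=> hu; apply: ge0C; apply: ip_ge0. Qed.
Lemma Nn_ge0 u : hs u -> 0 <= Nn u.
Proof. by move=> hu; rewrite -lecR -ipNN //; apply: ip_ge0. Qed.
Lemma Nn_eq0 u : hs u -> Nn u = 0 -> u = @fzero R X.
Proof. by move=> hu h0; apply: (@ip_eq0 R X H u hu); rewrite (ipNN hu) h0. Qed.
Lemma re_ipC u v : hs u -> hs v -> re (ip v u) = re (ip u v).
Proof. by move=> hu hv; rewrite (ip_conj hu hv) reJ. Qed.
Lemma NnD u v : hs u -> hs v -> Nn (fadd u v) = Nn u + Nn v + 2 * re (ip u v).
Proof.
move=> hu hv; rewrite /Nn ipD ?ipDr //; try by apply: hsD.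
rewrite !reD re_ipC //; ring.
Qed.
Lemma NnB u v : hs u -> hs v -> Nn (fsub u v) = Nn u + Nn v - 2 * re (ip u v).
Proof.
move=> hu hv; rewrite /Nn ipBl ?ipBr //; try by apply: hs_sub.
rewrite !reB re_ipC //; ring.
Qed.
Lemma NnZ a u : hs u -> Nn (fscale a u) = msq a * Nn u.
Proof.
move=> hu; rewrite /Nn ipZ ?ipZr //; try by apply: hsZ.
by rewrite mulrA [a * _]mulrC mulJ ipNN // -rmorphM.
Qed.
Lemma re_ipZr a f g : hs f -> hs g -> re (ip f (fscale a g)) = re a * re (ip f g) + im a * im (ip f g).
Proof. by move=> hf hg; rewrite ipZr // reM reJ imJ; ring. Qed.

Lemma CS_re u v : hs u -> hs v -> re (ip u v) ^+ 2 <= Nn u * Nn v.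
Proof.
move=> hu hv; have [hv0|hvp] := eqVneq (Nn v) 0.
  by rewrite hv0 (Nn_eq0 hv hv0) ip0r // re0 mulr0 expr2 mul0r.
have nv := Nn_ge0 hv; have nu := Nn_ge0 hu.
have vp : 0 < Nn v by rewrite lt0r hvp nv.
set r := re (ip u v).
have := Nn_ge0 (hs_sub hu (hsZ ((r / Nn v)%:C) hv)).
rewrite NnB ?NnZ //; last by apply: hsZ.
rewrite re_ipZr // reC imC /msq reC imC.
have e : r / Nn v * Nn v = r by rewrite divfK.
rewrite -/r => h.
have h2 : 0 <= Nn u * Nn v - r ^+ 2.
  have : 0 <= (Nn u + ((r / Nn v) ^+ 2 + 0 ^+ 2) * Nn v - 2 * (r / Nn v * r + 0 * im (ip u v))) * Nn v by apply: mulr_ge0.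
  set q := r / Nn v in e *; move=> h3. 
  have -> : Nn u * Nn v - r ^+ 2 = (Nn u + (q ^+ 2 + 0 ^+ 2) * Nn v - 2 * (q * r + 0 * im (ip u v))) * Nn v.
    have -> : (Nn u + (q ^+ 2 + 0 ^+ 2) * Nn v - 2 * (q * r + 0 * im (ip u v))) * Nn v = Nn u * Nn v + (q * Nn v) ^+ 2 - 2 * r * (q * Nn v) by ring.
    by rewrite e; ring.
  done.
lra.
Qed.
Lemma CS u v : hs u -> hs v -> msq (ip u v) <= Nn u * Nn v.
Proof.
move=> hu hv; set z := ip u v.
have hv' := hsZ z hv.
have := CS_re hu hv'; rewrite NnZ // ipZr // mulJ reC.
have m0 := msq_ge0 z; have nu := Nn_ge0 hu; have nv := Nn_ge0 hv.
have [->|mp] := eqVneq (msq z) 0; first by rewrite mulr_ge0.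
have mpos : 0 < msq z by rewrite lt0r mp.
move=> h; have : 0 <= msq z * (Nn u * Nn v - msq z).
  by move: h; rewrite expr2; move=> h; rewrite mulrBr; lra.
by rewrite pmulr_rge0 // subr_ge0.
Qed.

Lemma eval_bound u x : hs u -> msq (u x) <= Nn u * Nn (kern H x).
Proof. by move=> hu; rewrite (reproducing x hu); apply: CS => //; apply: kern_hs. Qed.

Lemma sqrt_ip u : hs u -> sqrtC (ip u u) = sqrtC ((Nn u)%:C).
Proof. by move=> hu; rewrite ipNN. Qed.

Lemma hnorm_lt u (eps : R) : hs u -> 0 < eps -> (sqrtC (ip u u) < eps%:C) = (Nn u < eps ^+ 2).
Proof.
move=> hu he; rewrite sqrt_ip // -{1}(@sqrCK _ eps%:C); last by rewrite ler0c ltW.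
rewrite ltr_sqrtC ?nnegrE ?ler0c ?Nn_ge0 // ?exprn_ge0 ?ler0c ?ltW //.
by rewrite -rmorphXn ltcR.
Qed.

Lemma hnorm_le a b : hs a -> hs b -> hnorm H a <= hnorm H b -> Nn a <= Nn b.
Proof.
move=> ha hb; rewrite /hnorm !sqrt_ip // ler_sqrtC ?nnegrE ?ler0c ?Nn_ge0 //.
by rewrite lecR.
Qed.
Lemma inv_small (e : R) : 0 < e -> exists N : nat, forall n, (N <= n)%N -> (n.+1%:R)^-1 < e.
Proof.
move=> he; have he' : 0 <= e^-1 by rewrite invr_ge0 ltW.
exists (Num.bound (e^-1)) => n hn.
have h1 := archi_boundP he'.
have h2 : (Num.bound e^-1)%:R <= n.+1%:R :> R by rewrite ler_nat (leq_trans hn).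
have h3 : e^-1 < n.+1%:R by apply: lt_le_trans h2.
rewrite -[e]invrK ltf_pV2 ?posrE ?invr_gt0 //.
Qed.

Lemma cauchy_lim (u : nat -> F) : (forall n, hs (u n)) ->
  (forall d : R, 0 < d -> exists N, forall m n, (N <= m)%N -> (N <= n)%N -> Nn (fsub (u m) (u n)) < d) ->
  exists l, hs l /\ forall d : R, 0 < d -> exists N, forall n, (N <= n)%N -> Nn (fsub l (u n)) < d.
Proof.
move=> hu hc; have [l [hl hlim]] : exists l, hs l /\
      (forall eps : R, 0 < eps -> exists N, forall n, (N <= n)%N ->
        sqrtC (ip (fsub l (u n)) (fsub l (u n))) < eps%:C).
  apply: hs_complete => // eps he.
  have [N hN] := hc (eps ^+ 2) (exprn_gt0 2 he).
  by exists N => m n hm hn; rewrite hnorm_lt ?hN //; apply: hs_sub.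
exists l; split => // d hd.
have hs := sqrtr_gt0 d; rewrite hd in hs.
have [N hN] := hlim _ hs.
exists N => n hn; have := hN n hn; rewrite hnorm_lt //; last by apply: hs_sub.
by rewrite sqr_sqrtr // ltW.
Qed.
Lemma parallelogram (a b : F) : hs a -> hs b -> Nn (fsub a b) + Nn (fadd a b) = 2 * Nn a + 2 * Nn b.
Proof. by move=> ha hb; rewrite NnB // NnD //; ring. Qed.

Lemma fadd_sub (a b : F) : fadd b (fsub a b) = a.
Proof. by apply: functional_extensionality => x; rewrite /fadd/fsub addrC subrK. Qed.

Lemma riesz (L : F -> R[i]) (C : R) : 0 <= C ->
  (forall f g, hs f -> hs g -> L (fadd f g) = L f + L g) ->
  (forall a f, hs f -> L (fscale a f) = a * L f) ->
  (forall g, hs g -> msq (L g) <= C * Nn g) ->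
  exists y, hs y /\ forall g, hs g -> L g = ip g y.
Proof.
move=> C0 LD LZ LB.
have L0 : L (@fzero R X) = 0.
  have -> : @fzero R X = fscale 0 (@fzero R X).
    by apply: functional_extensionality => x; rewrite /fscale mul0r.
  by rewrite LZ ?mul0r //; apply: hs0.
have LBs : forall f g, hs f -> hs g -> L (fsub f g) = L f - L g.
  by move=> f g hf hg; rewrite fsubE LD ?LZ ?mulN1r //; apply: hsZ.
case: (classic (exists u, hs u /\ L u <> 0)) => [[u [hu Lu]]|hno]; last first.
  exists (@fzero R X); split; first exact: hs0.
  move=> g hg; rewrite ip0r //; apply: NNPP => ne; apply: hno; exists g; split => //.
pose A := fun v => hs v /\ L v = 1.
have hu1 : A (fscale (L u)^-1 u).
  split; first by apply: hsZ.
  by rewrite LZ // mulVf //; apply/eqP.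
pose S : set R := fun t => exists v, A v /\ t = Nn v.
have Sne : S !=set0 by exists (Nn (fscale (L u)^-1 u)); exists (fscale (L u)^-1 u).
have Slb0 : lbound S 0 by move=> t [v [[hv _] ->]]; apply: Nn_ge0.
have Slb : has_lbound S by exists 0.
have hinf : has_inf S by split.
pose d := inf S.
have d_le : forall v, A v -> d <= Nn v.
  by move=> v Av; apply: (ge_inf Slb); exists v.
have d_ge0 : 0 <= d by apply: lb_le_inf.
pose P := fun (n : nat) v => A v /\ Nn v < d + (n.+1%:R)^-1.
have exP : forall n, exists v, P n v.
  move=> n; have hp : 0 < (n.+1%:R)^-1 :> R by rewrite invr_gt0 ltr0Sn.
  have [t [v [Av ->]] lt] := inf_adherent hp hinf.
  by exists v.
pose vs := fun n => epsilon (inhabits (@fzero R X)) (P n).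
have hvs : forall n, P n (vs n) by move=> n; apply: epsilon_spec; apply: exP.
have hvs_hs : forall n, hs (vs n) by move=> n; case: (hvs n) => [[]].
have mid : forall a b, A a -> A b -> 4 * d <= Nn (fadd a b).
  move=> a b [ha La] [hb Lb].
  have Aw : A (fscale (2^-1)%:C (fadd a b)).
    split; first by apply: hsZ; apply: hsD.
    rewrite LZ ?LD ?La ?Lb //; last by apply: hsD.
    by rewrite -[1 + 1]/(2%:R) -rmorphMn /= -rmorphM mulVf ?pnatr_eq0 // rmorph1.
  have := d_le _ Aw; rewrite NnZ; last by apply: hsD.
  rewrite /msq reC imC expr0n /= addr0.
  have e : 4 * (2^-1) ^+ 2 = 1 :> R by rewrite expr2; field.
  move=> h; have := ler_wpM2l (ler0n R 4) h.
  by rewrite mulrA e mul1r.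
have [v [hv hlim]] : exists l, hs l /\ forall e : R, 0 < e -> exists N, forall n, (N <= n)%N -> Nn (fsub l (vs n)) < e.
  apply: cauchy_lim => // e he.
  have [N hN] := inv_small (divr_gt0 he (ltr0Sn R 3)).
  exists N => m n hm hn.
  have := parallelogram (hvs_hs m) (hvs_hs n).
  have := mid _ _ (proj1 (hvs m)) (proj1 (hvs n)).
  have := proj2 (hvs m); have := proj2 (hvs n).
  have := hN m hm; have := hN n hn.
  have : e / 4%:R * 4%:R = e by rewrite divfK // pnatr_eq0.
  move=> h0 h1 h2 h3 h4 h5 h6. set x := (n.+1%:R^-1) in h1 h3. set y := (m.+1%:R^-1) in h2 h4. set q := e / 4 in h0 h1 h2. set s := Nn (fadd _ _) in h5 h6. lra.
have Lv : L v = 1.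
  apply/eqP; rewrite -subr_eq0; apply/eqP; apply: msq0.
  apply/eqP; rewrite eq_le msq_ge0 andbT; apply/ler_addgt0Pr => e he.
  have [N hN] := hlim (e / (C + 1)) (divr_gt0 he (ltr_wpDl C0 ltr01)).
  have := proj2 (proj1 (hvs N)) => LvN.
  have hsN := hvs_hs N.
  have := LB _ (hs_sub hv hsN); rewrite LBs // LvN.
  have := hN N (leqnn N).
  have := Nn_ge0 (hs_sub hv hsN).
  set w := Nn _ => h1 h2 h3.
  have h4 : C * w <= C * (e / (C + 1)) by apply: ler_wpM2l => //; apply: ltW.
  have h5 : C * (e / (C + 1)) <= e.
    rewrite mulrA ler_pdivrMr; last by lra.
    by rewrite mulrDr mulr1; have := ltW he; lra.
  lra.
have Av : A v by [].
have Nv_le : Nn v <= d.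
  apply/ler_addgt0Pr => e he.
  pose K := d + 1.
  have Kp : 0 < K by rewrite /K; lra.
  pose dl := Num.min (e / 3%:R) (e ^+ 2 / (36%:R * K)).
  have dlp : 0 < dl by rewrite lt_min; apply/andP; split; apply: divr_gt0 => //; rewrite ?exprn_gt0 ?mulr_gt0.
  have dl1 : dl <= e / 3%:R by rewrite ge_min lexx.
  have dl2 : K * dl <= e ^+ 2 / 36%:R.
    have : dl <= e ^+ 2 / (36%:R * K) by rewrite ge_min lexx orbT.
    move=> h; have := ler_wpM2l (ltW Kp) h.
    have -> : K * (e ^+ 2 / (36%:R * K)) = e ^+ 2 / 36%:R.
        by field; rewrite gt_eqF.
    by [].
  have [N1 hN1] := hlim dl dlp.
  have [N2 hN2] := inv_small (divr_gt0 he (ltr0Sn R 2)).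
  pose n := maxn N1 N2.
  have h1 := hN1 n (leq_maxl _ _).
  have h2 := hN2 n (leq_maxr _ _).
  have [_ h3] := hvs n.
  have hsn := hvs_hs n.
  have hw := hs_sub hv hsn.
  have ev := NnD hsn hw; rewrite fadd_sub in ev.
  have cs := CS_re hsn hw.
  have h4 : (n.+1%:R)^-1 <= 1 :> R by rewrite invf_le1 ?ler1n // ltr0Sn.
  have nw0 := Nn_ge0 hw.
  have nn0 := Nn_ge0 hsn.
  have h5 : Nn (vs n) * Nn (fsub v (vs n)) <= K * dl.
    apply: ler_pM => //; last by apply: ltW.
    move: h3 h4; set x := (n.+1%:R^-1); rewrite /K; lra.
  set r := re _ in ev cs.
  have h6 : r ^+ 2 <= (e / 6%:R) ^+ 2.
    apply: (le_trans cs); apply: (le_trans h5); apply: (le_trans dl2).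
    by rewrite expr2 expr2 -[e / 6%:R * (e / 6%:R)]/(e * 6%:R^-1 * (e * 6%:R^-1)) mulrACA -invfM -natrM.
  have h7 : r <= e / 6%:R.
    have ep : 0 <= e / 6%:R by rewrite divr_ge0 // ltW.
    move: h6 ep; set q := e / 6%:R; nra.
  move: ev h1 h2 h7 dl1; set x := (n.+1%:R^-1); set y := e / 6%:R; set z := e / 3%:R.
  have : y * 6%:R = e by rewrite /y divfK // pnatr_eq0.
  have : z * 3%:R = e by rewrite /z divfK // pnatr_eq0.
  move: h3; rewrite -/x. lra.
have key : forall z, hs z -> L z = 0 -> re (ip v z) = 0.
  move=> z hz Lz; set r := re (ip v z).
  pose t := - r / (Nn z + 1).
  have nz0 := Nn_ge0 hz.
  have Az : A (fadd v (fscale t%:C z)).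
    split; first by apply: hsD => //; apply: hsZ.
    by rewrite LD ?LZ ?Lz ?Lv ?mulr0 ?addr0 //; apply: hsZ.
  have := le_trans Nv_le (d_le _ Az).
  rewrite NnD //; last by apply: hsZ.
  rewrite NnZ // re_ipZr // reC imC /msq reC imC -/r.
  have et : t * (Nn z + 1) = - r by rewrite /t divfK // gt_eqF // ltr_wpDl.
  move=> h.
  have h2 : 0 <= (t ^+ 2 * Nn z + 2 * (t * r)) * (Nn z + 1) ^+ 2.
    by apply: mulr_ge0; [lra | apply: sqr_ge0].
  have e2 : (t ^+ 2 * Nn z + 2 * (t * r)) * (Nn z + 1) ^+ 2 = (t * (Nn z + 1)) ^+ 2 * Nn z + 2 * (t * (Nn z + 1)) * r * (Nn z + 1) by ring.
  rewrite e2 et in h2.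
  have : r ^+ 2 * (Nn z + 2) <= 0 by move: h2; nra.
  move=> h3; have : r ^+ 2 <= 0 by move: h3; have := sqr_ge0 r; nra.
  move=> h4; apply/eqP; rewrite -sqrf_eq0 eq_le h4 sqr_ge0 //.
have orth : forall z, hs z -> L z = 0 -> ip z v = 0.
  move=> z hz Lz.
  have r0 := key z hz Lz.
  have hiz := hsZ 'i hz.
  have i0 : im (ip v z) = 0.
    have := key _ hiz; rewrite LZ // Lz mulr0 => /(_ erefl).
    by rewrite re_ipZr //= mul0r add0r mul1r.
  rewrite (ip_conj hv hz); have -> : ip v z = 0 by apply: ceqP.
  exact: conjc0.
have Nv0 : Nn v != 0.
  apply/eqP => h0; move: Lv; rewrite (Nn_eq0 hv h0) L0 => /eqP.
  by rewrite eq_sym oner_eq0.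
exists (fscale ((Nn v)^-1)%:C v); split; first by apply: hsZ.
move=> g hg; set l := L g.
have hz : hs (fsub g (fscale l v)) by apply: hs_sub => //; apply: hsZ.
have := orth _ hz; rewrite LBs ?LZ ?Lv ?mulr1 ?subrr //; last by apply: hsZ.
move=> /(_ erefl); rewrite ipBl ?ipZ //; last by apply: hsZ.
rewrite ipNN // => /eqP; rewrite subr_eq0 => /eqP e.
rewrite ipZr // e conjc_real mulrCA -rmorphM mulVf // mulr1 //.
Qed.
Lemma mb_hs phi g : mult_ball H phi -> hs g -> hs (fmul phi g).
Proof. by move=> mb hg; case: (mb g hg). Qed.
Lemma mb_le phi g : mult_ball H phi -> hs g -> Nn (fmul phi g) <= Nn g.
Proof. by move=> mb hg; case: (mb g hg) => h1 h2; apply: hnorm_le. Qed.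

Lemma fmulD phi f g : fmul phi (fadd f g) = fadd (fmul phi f) (fmul phi g).
Proof. by apply: functional_extensionality => x; rewrite /fmul/fadd mulrDr. Qed.
Lemma fmulZ phi a f : fmul phi (fscale a f) = fscale a (fmul phi f).
Proof. by apply: functional_extensionality => x; rewrite /fmul/fscale mulrCA. Qed.
Lemma fmulB phi f g : fmul phi (fsub f g) = fsub (fmul phi f) (fmul phi g).
Proof. by apply: functional_extensionality => x; rewrite /fmul/fsub mulrBr. Qed.
Lemma fmulM a b g : fmul (fun x => a x * b x) g = fmul a (fmul b g).
Proof. by apply: functional_extensionality => x; rewrite /fmul mulrA. Qed.
Lemma fmul1 g : fmul (fun _ => 1) g = g.
Proof. by apply: functional_extensionality => x; rewrite /fmul mul1r. Qed.

Lemma madj_spec phi h : mult_ball H phi -> hs h ->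
  hs (madj H phi h) /\ forall g, hs g -> ip (fmul phi g) h = ip g (madj H phi h).
Proof.
move=> mb hh; rewrite /madj.
apply: (@epsilon_spec _ (inhabits (@fzero R X)) (fun y => hs y /\ forall g, hs g -> ip (fmul phi g) h = ip g y)).
apply: (@riesz (fun g => ip (fmul phi g) h) (Nn h)).
- exact: Nn_ge0.
- by move=> f g hf hg; rewrite fmulD ipD //; apply: mb_hs.
- by move=> a f hf; rewrite fmulZ ipZ //; apply: mb_hs.
- move=> g hg; apply: (le_trans (CS (mb_hs mb hg) hh)).
  rewrite mulrC; apply: ler_wpM2l; first exact: Nn_ge0.
  exact: mb_le.
Qed.

Lemma uniq_rep y1 y2 : hs y1 -> hs y2 -> (forall g, hs g -> ip g y1 = ip g y2) -> y1 = y2.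
Proof.
move=> h1 h2 e.
have hd := hs_sub h1 h2.
have : Nn (fsub y1 y2) = 0.
  by rewrite /Nn ipBr // e // subrr.
move=> /(Nn_eq0 hd) e0; apply: functional_extensionality => x.
by have := congr1 (fun F => F x) e0; rewrite /fsub/fzero => /eqP; rewrite subr_eq0 => /eqP.
Qed.

Lemma madj_eq phi h y : mult_ball H phi -> hs h -> hs y ->
  (forall g, hs g -> ip (fmul phi g) h = ip g y) -> madj H phi h = y.
Proof.
move=> mb hh hy e; have [hm sm] := madj_spec mb hh.
by apply: uniq_rep => // g hg; rewrite -sm // e.
Qed.

Lemma madj_hs phi h : mult_ball H phi -> hs h -> hs (madj H phi h).
Proof. by move=> mb hh; case: (madj_spec mb hh). Qed.

Lemma madj_norm phi h : mult_ball H phi -> hs h -> Nn (madj H phi h) <= Nn h.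
Proof.
move=> mb hh; have [hy sy] := madj_spec mb hh; set y := madj H phi h in hy sy *.
have := CS (mb_hs mb hy) hh; rewrite sy // ipNN // /msq reC imC.
have := mb_le mb hy; have := Nn_ge0 hy; have := Nn_ge0 hh.
set p := Nn y; set q := Nn h; set s := Nn (fmul phi y).
rewrite expr0n /= addr0 => h1 h2 h3 h4.
have h5 : p ^+ 2 <= p * q by apply: (le_trans h4); apply: ler_wpM2r.
nra.
Qed.

Lemma mb_one : mult_ball H (fun _ => 1).
Proof. by move=> g hg; rewrite fmul1. Qed.

Lemma mb_mul a b : mult_ball H a -> mult_ball H b -> mult_ball H (fun x => a x * b x).
Proof.
move=> ma mbb g hg; rewrite fmulM; case: (mbb g hg) => h1 h2; case: (ma _ h1) => h3 h4.
by split => //; apply: le_trans h4 h2.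
Qed.
Section Prod.
Variable phi : nat -> X -> R[i].
Hypothesis mphi : forall n, mult_ball H (phi n).

Lemma Phi0 : Phi phi 0 = fun _ => 1.
Proof. by apply: functional_extensionality => x; rewrite /Phi big_ord0. Qed.
Lemma PhiS n : Phi phi n.+1 = fun x => Phi phi n x * phi n x.
Proof. by apply: functional_extensionality => x; rewrite /Phi big_ord_recr. Qed.
Definition PhiF (N k : nat) : X -> R[i] := fun x => \prod_(i < k) phi (N + i)%N x.
Lemma Phi_add N k : Phi phi (N + k) = fun x => Phi phi N x * PhiF N k x.
Proof.
elim: k => [|k IH].
  by apply: functional_extensionality => x; rewrite addn0 /PhiF big_ord0 mulr1.
rewrite addnS PhiS IH; apply: functional_extensionality => x.
by rewrite /PhiF big_ord_recr /= mulrA.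
Qed.
Lemma mb_Phi n : mult_ball H (Phi phi n).
Proof.
elim: n => [|n IH]; first by rewrite Phi0; apply: mb_one.
by rewrite PhiS; apply: mb_mul.
Qed.
Lemma mb_PhiF N k : mult_ball H (PhiF N k).
Proof.
elim: k => [|k IH].
  have -> : PhiF N 0 = fun _ => 1.
    by apply: functional_extensionality => x; rewrite /PhiF big_ord0.
  exact: mb_one.
have -> : PhiF N k.+1 = fun x => PhiF N k x * phi (N + k)%N x.
  by apply: functional_extensionality => x; rewrite /PhiF big_ord_recr.
exact: mb_mul.
Qed.

Variable f : X -> R[i].
Hypothesis hf : hs f.
Definition gs n := madj H (Phi phi n) f.
Lemma gs_hs n : hs (gs n). Proof. exact: madj_hs (mb_Phi n) hf. Qed.
Lemma gs0 : gs 0 = f.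
Proof. by rewrite /gs Phi0; apply: madj_eq => //; [apply: mb_one | move=> g hg; rewrite fmul1]. Qed.
Lemma gsS n : gs n.+1 = madj H (phi n) (gs n).
Proof.
apply: madj_eq; [exact: mb_Phi | exact: hf | exact: madj_hs (gs_hs n) |].
move=> g hg; rewrite PhiS fmulM.
have [_ s1] := madj_spec (mb_Phi n) hf.
have [_ s2] := madj_spec (mphi n) (gs_hs n).
by rewrite s1 ?s2 //; apply: mb_hs.
Qed.

Lemma telescope n : psum H phi f n = fsub f (fmul (Phi phi n) (gs n)).
Proof.
elim: n => [|n IH].
  apply: functional_extensionality => x; rewrite /psum big_ord0 gs0 Phi0 /fsub/fmul mul1r subrr //.
apply: functional_extensionality => x.
have := congr1 (fun F => F x) IH; rewrite /psum big_ord_recr /= => ->.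
rewrite gsS PhiS /fsub/fmul/Qop/fsub/fmul -/(gs n).
ring.
Qed.

Lemma gs_dec n : Nn (gs n.+1) <= Nn (gs n).
Proof. by rewrite gsS; apply: madj_norm => //; apply: gs_hs. Qed.
Lemma gs_decr n m : (n <= m)%N -> Nn (gs m) <= Nn (gs n).
Proof.
move=> /subnK <-; elim: (m - n)%N => [|k IH]; first by rewrite add0n.
by rewrite addSn; apply: le_trans (gs_dec _) IH.
Qed.

Lemma cauchy_step n k : Nn (fsub (fmul (Phi phi n) (gs n)) (fmul (Phi phi (n + k)) (gs (n + k))))
   <= Nn (gs n) - Nn (gs (n + k)).
Proof.
set m := (n + k)%N.
have hgm := gs_hs m; have hgn := gs_hs n.
have mpsi := mb_PhiF n k.
have hpg := mb_hs mpsi hgm.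
have e1 : fmul (Phi phi m) (gs m) = fmul (Phi phi n) (fmul (PhiF n k) (gs m)).
  by rewrite /m Phi_add fmulM.
rewrite e1 -fmulB.
apply: (le_trans (mb_le (mb_Phi n) (hs_sub hgn hpg))).
rewrite NnB //.
have e2 : re (ip (gs n) (fmul (PhiF n k) (gs m))) = Nn (gs m).
  rewrite re_ipC //.
  have [_ s1] := madj_spec (mb_Phi n) hf.
  have [_ s2] := madj_spec (mb_Phi m) hf.
  by rewrite -[gs n]/(madj H (Phi phi n) f) -s1 // -e1 s2.
rewrite e2; have := mb_le mpsi hgm; lra.
Qed.
End Prod.
Lemma Nn_subC u v : hs u -> hs v -> Nn (fsub u v) = Nn (fsub v u).
Proof. by move=> hu hv; rewrite !NnB // re_ipC //; ring. Qed.

Lemma Nn_zero_sub u : hs u -> Nn (fsub (@fzero R X) u) = Nn u.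
Proof.
move=> hu; rewrite NnB //; last exact: hs0.
by rewrite ip0l // /Nn ip0l ?re0 //; [ring | exact: hs0].
Qed.

Lemma msq_lt (z : R[i]) (e : R) : 0 < e -> `|z| < e%:C -> msq z < e ^+ 2.
Proof.
move=> he; rewrite normc_def ltcR.
have m0 := msq_ge0 z.
case: z m0 => a b; rewrite /msq /= => m0 h.
have s0 := sqrtr_ge0 (a ^+ 2 + b ^+ 2).
have := sqr_sqrtr m0; move: h s0; set s := Num.sqrt _ => h s0 <-.
by rewrite expr2 expr2; nra.
Qed.

Lemma small0 (x : R) : (forall d, 0 < d -> x <= d) -> x <= 0.
Proof. by move=> h; apply/ler_addgt0Pr => e he; rewrite add0r h. Qed.
End S.

Theorem theorem2p1 (R : realType) (X : Type) (H : RKHS R X)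
  (phi : nat -> X -> R[i]) :
  (forall n, mult_ball H (phi n)) ->
  (forall x, forall eps : R, 0 < eps ->
     exists N, forall n, (N <= n)%N -> `|Phi phi n x| < eps%:C) ->
  forall f, hs H f ->
    forall eps : R, 0 < eps -> exists N, forall n, (N <= n)%N ->
      hnorm H (fsub f (psum H phi f n)) < eps%:C.
Proof.
move=> mphi hdec f hf eps he.
pose P n := fmul (Phi phi n) (gs H phi f n).
have hP : forall n, hs H (P n) by move=> n; apply: mb_hs (mb_Phi mphi n) (gs_hs mphi hf n).
pose a n := Nn H (gs H phi f n).
pose S : set R := fun t => exists n, t = a n.
have Sne : S !=set0 by exists (a 0%N); exists 0%N.
have Slb0 : lbound S 0 by move=> t [n ->]; apply: Nn_ge0; apply: gs_hs.
have hinf : has_inf S by split => //; exists 0.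
have cauchy : forall d : R, 0 < d -> exists N, forall m n, (N <= m)%N -> (N <= n)%N -> Nn H (fsub (P m) (P n)) < d.
  move=> d hd; have [t [N0 ->] lt] := inf_adherent hd hinf.
  exists N0 => m n hm hn.
  have key : forall p q, (N0 <= p)%N -> (p <= q)%N -> Nn H (fsub (P p) (P q)) < d.
    move=> p q hp hpq; rewrite -(subnK hpq) addnC.
    apply: le_lt_trans (cauchy_step mphi hf p (q - p)) _.
    have := gs_decr mphi hf hp; have := @ge_inf _ S (ex_intro _ 0 Slb0) (a (p + (q - p))%N).
    move=> /(_ (ex_intro _ _ erefl)); rewrite -/(a p) -/(a N0) -/(a (p + (q - p))%N).
    move: lt; lra.
  case: (leqP m n) => hmn; first exact: key.
  by rewrite Nn_subC //; apply: key => //; apply: ltnW.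
have [l [hl hlim]] := cauchy_lim hP cauchy.
have l0 : l = @fzero R X.
  apply: functional_extensionality => x; apply: msq0; apply/eqP; rewrite eq_le msq_ge0 andbT.
  apply: small0 => d hd.
  pose K := Nn H (kern H x) + 1; pose B := Nn H f + 1.
  have Kp : 0 < K by rewrite /K; have := Nn_ge0 (kern_hs H x); lra.
  have Bp : 0 < B by rewrite /B; have := Nn_ge0 hf; lra.
  have d1p : 0 < d / (4%:R * K) by rewrite divr_gt0 // mulr_gt0.
  have d2p : 0 < d / (4%:R * K * B) by rewrite divr_gt0 // !mulr_gt0.
  have [N1 hN1] := hlim _ d1p.
  have sp : 0 < Num.sqrt (d / (4%:R * K * B)) by rewrite sqrtr_gt0.
  have [N2 hN2] := hdec x _ sp.
  pose n := maxn N1 N2.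
  have h1 := hN1 n (leq_maxl _ _).
  have h2 := msq_lt sp (hN2 n (leq_maxr _ _)).
  rewrite sqr_sqrtr in h2; last exact: ltW.
  have lx : l x = fsub l (P n) x + P n x by rewrite /fsub subrK.
  have hsub := hs_sub hl (hP n).
  have e1 := eval_bound x hsub.
  have hgn := gs_hs mphi hf n.
  have e2 := eval_bound x hgn.
  have e3 : Nn H (gs H phi f n) <= Nn H f.
    by have := gs_decr mphi hf (leq0n n); rewrite gs0.
  have e4 : msq (P n x) = msq (Phi phi n x) * msq (gs H phi f n x) by rewrite /P /fmul msqM.
  have := msqD (fsub l (P n) x) (P n x); rewrite -lx e4.
  have k0 := Nn_ge0 (kern_hs H x).
  have g0 := Nn_ge0 hgn.
  have s0 := Nn_ge0 hsub.
  have m0 := msq_ge0 (Phi phi n x).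
  have m1 := msq_ge0 (gs H phi f n x).
  have m2 := msq_ge0 (fsub l (P n) x).
  have kK : Nn H (kern H x) <= K by rewrite /K; lra.
  have gB : Nn H f <= B by rewrite /B; lra.
  set A1 := Nn H (fsub l (P n)) in h1 e1 s0.
  set kk := Nn H (kern H x) in e1 e2 k0 kK.
  set g := Nn H (gs H phi f n) in e2 e3 g0.
  set m := msq (Phi phi n x) in h2 m0 *.
  set q := msq (gs H phi f n x) in e2 m1 *.
  set r := msq (fsub l (P n) x) in e1 m2 *.
  have t1 : A1 * kk <= d / 4%:R.
    have h : A1 * kk <= d / (4%:R * K) * K by apply: ler_pM => //; apply: ltW.
    apply: (le_trans h); rewrite le_eqVlt; apply/orP; left; apply/eqP.
    by field; rewrite gt_eqF.
  have t2 : m * (g * kk) <= d / 4%:R.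
    have gk : g * kk <= B * K by apply: ler_pM => //; rewrite ?/B ?/K; lra.
    have h : m * (g * kk) <= d / (4%:R * K * B) * (B * K) by apply: ler_pM => //; [apply: mulr_ge0 | apply: ltW].
    apply: (le_trans h); rewrite le_eqVlt; apply/orP; left; apply/eqP.
    by field; rewrite ?gt_eqF.
  have t3 : m * q <= m * (g * kk) by apply: ler_wpM2l.
  have : d / 4%:R * 4%:R = d by rewrite divfK // pnatr_eq0.
  set w := d / 4%:R in t1 t2 *.
  move: t1 t2 t3 e1; move: (m * q) (m * (g * kk)) (A1 * kk) => p1 p2 p3.
  lra.
have [N hN] := hlim (eps ^+ 2) (exprn_gt0 2 he).
exists N => n hn; rewrite telescope // /hnorm.
have -> : fsub f (fsub f (P n)) = P n.
  by apply: functional_extensionality => x; rewrite /fsub opprB addrC subrK.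
rewrite hnorm_lt // -(Nn_zero_sub (hP n)) -l0.
exact: hN.
Qed.
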